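(* Let $\mathcal{T}=(V,A,E,f,q,v_0)$ be a decorated pseudo-rooted tree such that $f(\alpha)=1$ for all $\alpha\in A\setminus A_0$. Then $M(\mathcal{T}_\alpha)-M_\alpha(\mathcal{T})=I(\alpha)$ for every $\alpha\in A\setminus A_0$.
   Context: A graph is a pair $(X_0,X_1)$ of finite sets such that each element of $X_1$ (an edge) is a $2$-element subset of $X_0$; elements of $X_0$ are cells. The valency $\delta_x$ of a cell is the number of edges containing it. A path is a tuple $(x_0,\dots,x_n)$ ($n\ge0$) of cells with $\{x_i,x_{i+1}\}$ an edge for each $i<n$, these edges pairwise distinct; a cell/edge is in the path if it is some $x_i$ / some $\{x_i,x_{i+1}\}$. The graph is a tree if any two cells $x,y$ are joined by a unique path $\gamma_{x,y}$. A decorated tree is $(V,A,E,f,q)$ with $V$ (vertices), $A$ (arrows) finite disjoint sets, $(V\cup A,E)$ a tree, every arrow of valency $1$, $f:A\to\mathbb{Z}$, $q(e,x)\in\mathbb{Z}$ for each $e\in E$, $x\in e$, with $q(e,\alpha)=1$ for $\alpha\in A$, and for each $v\in V$ and distinct edges $e,e'\ni v$, $\gcd(q(e,v),q(e',v))=1$. $A_0=\{\alpha\in A:f(\alpha)=0\}$. An edge $\varepsilon$ is incident to a path $\gamma$ if it is not in $\gamma$ but contains a cell $u$ of $\gamma$; $q(\varepsilon,\gamma):=q(\varepsilon,u)$. For $v\ne\alpha$, $v\in V\cup A$, $\alpha\in A$: $x_{v,\alpha}=f(\alpha)\prod_\varepsilon q(\varepsilon,\gamma_{v,\alpha})$ over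 edges incident to $\gamma_{v,\alpha}$ (empty product $=1$). For $v\in V\cup A_0$, $N_v=\sum_{\alpha\in A\setminus A_0}x_{v,\alpha}$; $M(\mathcal{T})=-\sum_{v\in V\cup A_0}N_v(\delta_v-2)$. For $\alpha\in A\setminus A_0$, $M_\alpha(\mathcal{T})=-\sum_{v\in V\cup A_0}x_{v,\alpha}(\delta_v-2)$. For a path $\gamma=(x_0,\dots,x_n)$, $n>0$, and a cell $u$ of $\gamma$, $Q(\gamma,u)=\prod q(\varepsilon,u)$ over edges $\varepsilon\ni u$ not in $\gamma$; $Q^*(\gamma)=\prod_{0<i<n}Q(\gamma,x_i)$. For $\alpha\in A\setminus A_0$, $I(\alpha)=\sum_{\beta\in(A\setminus A_0)\setminus\{\alpha\}}Q^*(\gamma_{\alpha,\beta})f(\alpha)f(\beta)$. A pseudo-root of $(V,A,E,f,q)$ is a vertex $v_0$ with $q(e,v_0)=1$ for all edges $e\ni v_0$, such that for every $v\in V\setminus\{v_0\}$ at most one edge $e\ni v$ not in $\gamma_{v_0,v}$ has $q(e,v)\ne1$. A decorated pseudo-rooted tree is $(V,A,E,f,q,v_0)$ with $v_0$ a pseudo-root. For nonempty $X\subseteq A\setminus A_0$, $\mathcal{T}_X$: let $\mathcal{T}'_X$ have arrow set $X$, vertices those of $\mathcal{T}$ on some $\gamma_{v_0,\alpha}$ ($\alpha\in X$), edges those of $\mathcal{T}$ in some $\gamma_{v_0,\alpha}$ ($\alpha\in X$), decorations as in $\mathcal{T}$; for each vertex $v$ of $\mathcal{T}'_X$ put $b_v=\prod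 q(e,v)$ over edges $e$ of $\mathcal{T}$ containing $v$ not in $\mathcal{T}'_X$, and if $b_v\ne1$ add an arrow $\alpha_v$ with $f(\alpha_v)=0$ and edge $\{v,\alpha_v\}$ decorated $b_v$ near $v$, $1$ near $\alpha_v$. The result, pseudo-rooted at $v_0$, is $\mathcal{T}_X$; $\mathcal{T}_\alpha:=\mathcal{T}_{\{\alpha\}}$. *)

(* Defs.v *)
From HB Require Import structures.
From mathcomp Require Import all_boot all_order all_algebra.
From Stdlib Require Import ClassicalEpsilon.
Set Implicit Arguments. Unset Strict Implicit. Unset Printing Implicit Defensive.
Import Order.TTheory GRing.Theory Num.Theory.
Local Open Scope ring_scope.

(* A decorated tree whose cells are drawn from the finite type T:
   vertices dV, arrows dA, edges dE (each a 2-element set of cells),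
   f : arrows -> Z, q(e,x) for e an edge and x in e.  Values of df / dq
   outside their intended domain are irrelevant. *)
Record dtree (T : finType) := DTree {
  dV : {set T};
  dA : {set T};
  dE : {set {set T}};
  df : T -> int;
  dq : {set T} -> T -> int }.

Section DecoratedTrees.
Variables (T : finType) (t : dtree T).

Definition cells : {set T} := dV t :|: dA t.

Definition valency (x : T) : nat := #|[set e in dE t | x \in e]|.

Definition path_edges (s : seq T) : seq {set T} :=
  [seq [set p.1; p.2] | p <- zip s (behead s)].

Definition is_path (x y : T) (s : seq T) : bool :=
  if s is x0 :: s' then
    [&& x0 == x, last x0 s' == y, all (fun z => z \in cells) s,
        all (fun e => e \in dE t) (path_edges s) & uniq (path_edges s)]
  else false.

Definition is_graph : Prop :=
  forall e, e \in dE t -> #|e| = 2%N /\ e \subset cells.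

Definition is_tree : Prop :=
  is_graph /\
  forall x y, x \in cells -> y \in cells ->
    exists p, is_path x y p /\ forall p', is_path x y p' -> p' = p.

Definition gamma (x y : T) : seq T :=
  epsilon (inhabits [::]) (fun p => is_path x y p).

Definition decorated : Prop :=
  [/\ dV t :&: dA t = set0,
      is_tree,
      (forall a, a \in dA t -> valency a = 1%N),
      (forall e a, e \in dE t -> a \in dA t -> a \in e -> dq t e a = 1) &
      (forall v e e', v \in dV t -> e \in dE t -> e' \in dE t -> v \in e ->
         v \in e' -> e != e' -> coprimez (dq t e v) (dq t e' v))].

Definition pseudo_root (v0 : T) : Prop :=
  [/\ v0 \in dV t,
      (forall e, e \in dE t -> v0 \in e -> dq t e v0 = 1) &
      (forall v, v \in dV t -> v != v0 ->
         #|[set e in dE t | (v \in e) && (e \notin path_edges (gamma v0 v))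
                             && (dq t e v != 1)]| <= 1)%N].

Definition A0 : {set T} := [set a in dA t | df t a == 0].

Definition incident (e : {set T}) (g : seq T) : bool :=
  [&& e \in dE t, e \notin path_edges g & [exists u in e, u \in g]].

Definition q_path (e : {set T}) (g : seq T) : int :=
  if [pick u in e | u \in g] is Some u then dq t e u else 1.

Definition xva (v a : T) : int :=
  df t a * \prod_(e in dE t | incident e (gamma v a)) q_path e (gamma v a).

Definition Nv (v : T) : int := \sum_(a in dA t :\: A0) xva v a.

Definition M : int :=
  - \sum_(v in dV t :|: A0) Nv v * ((valency v)%:Z - 2).

Definition Malpha (a : T) : int :=
  - \sum_(v in dV t :|: A0) xva v a * ((valency v)%:Z - 2).

Definition Qc (g : seq T) (u : T) : int :=
  \prod_(e in dE t | (u \in e) && (e \notin path_edges g)) dq t e u.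

(* Q^*(gamma) = product of Q(gamma, x_i) over 0 < i < n *)
Definition Qstar (g : seq T) : int :=
  if g is x :: s then \prod_(u <- behead (belast x s)) Qc g u else 1.

Definition Ialpha (a : T) : int :=
  \sum_(b in (dA t :\: A0) :\ a) Qstar (gamma a b) * df t a * df t b.

(* The construction T_X (for X a nonempty subset of A \ A0), on cells
   T + T: inl x is the old cell x, inr v is the new arrow alpha_v. *)
Section TX.
Variables (v0 : T) (X : {set T}).

Definition TXV : {set T} :=
  [set v in dV t | [exists a in X, v \in gamma v0 a]].
Definition TXE : {set {set T}} :=
  [set e in dE t | [exists a in X, e \in path_edges (gamma v0 a)]].
Definition bv (v : T) : int :=
  \prod_(e in dE t | (v \in e) && (e \notin TXE)) dq t e v.
Definition TXnew : {set T} := [set v in TXV | bv v != 1].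

Definition liftE (e : {set T}) : {set T + T} := [set inl x | x in e].

Definition TX : dtree (T + T)%type := {|
  dV := [set inl v | v in TXV];
  dA := [set inl a | a in X] :|: [set inr v | v in TXnew];
  dE := [set liftE e | e in TXE]
        :|: [set [set inl v; inr v] | v in TXnew];
  df := fun x => if x is inl y then df t y else 0;
  dq := fun e x => match x with
                   | inr _ => 1
                   | inl y => if e == [set inl y; inr y] then bv y
                              else dq t [set z | inl z \in e] y
                   end |}.
End TX.

End DecoratedTrees.

(* Main.v *)
Require Import Defs.
From HB Require Import structures.
From mathcomp Require Import all_boot all_order all_algebra.
From mathcomp Require Import ring zify.
From Stdlib Require Import ClassicalEpsilon.
Set Implicit Arguments. Unset Strict Implicit. Unset Printing Implicit Defensive.
Import Order.TTheory GRing.Theory Num.Theory.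


Lemma pe_cons2 (U : finType) (x y : U) s :
  path_edges (x :: y :: s) = [set x; y] :: path_edges (y :: s).
Proof. by []. Qed.

Lemma is_path_cons (U : finType) (t : dtree U) x y x0 s :
  is_path t x y (x0 :: s) = [&& x0 == x, last x0 s == y,
     all (fun z => z \in cells t) (x0 :: s),
     all (fun e => e \in dE t) (path_edges (x0 :: s)) &
     uniq (path_edges (x0 :: s))].
Proof. by []. Qed.

Lemma set2_cases (V : finType) (a b c d : V) : a != b ->
  [set a; b] = [set c; d] -> (a = c /\ b = d) \/ (a = d /\ b = c).
Proof.
move=> ab E.
have ha : a \in [set c; d] by rewrite -E set21.
have hb : b \in [set c; d] by rewrite -E set22.
have hc : c \in [set a; b] by rewrite E set21.
have hd : d \in [set a; b] by rewrite E set22.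
move: ha hb hc hd; rewrite !inE.
case/orP=> /eqP ha; case/orP=> /eqP hb; subst; rewrite ?eqxx in ab => //;
  case/orP=> /eqP hc; case/orP=> /eqP hd; subst; rewrite ?eqxx in ab => //; auto.
Qed.

Lemma imset_filter (A B : finType) (f : A -> B) (S : {set A}) (P : pred B) :
  [set e in f @: S | P e] = f @: [set x in S | P (f x)].
Proof.
apply/setP => e; rewrite inE; apply/andP/imsetP.
  by case=> /imsetP [x xS ->] Px; exists x => //; rewrite inE xS.
by case=> x; rewrite inE => /andP [xS Px] ->; split => //; exact: imset_f.
Qed.

Section Rooted.
Variables (U : finType) (t : dtree U) (r : U) (par : U -> U) (dep : U -> nat).
Local Notation C := (cells t).
Local Notation C' := (cells t :\ r).
Hypothesis Hr : r \in C.
Hypothesis Hpar : forall x, x \in C' -> par x \in C.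
Hypothesis Hdep : forall x, x \in C' -> (dep (par x) < dep x)%N.
Hypothesis HE : dE t = [set [set x; par x] | x in C'].

Fixpoint ancn (n : nat) (x : U) : seq U :=
  if n is n'.+1 then (if x == r then [:: x] else x :: ancn n' (par x))
  else [:: x].
Definition anc x := ancn (dep x) x.

Lemma inC' x : (x \in C') = (x != r) && (x \in C).
Proof. by rewrite in_setD1. Qed.

Lemma dep_pos x : x \in C' -> (0 < dep x)%N.
Proof. by move/Hdep => h; exact: leq_ltn_trans (leq0n _) h. Qed.

Lemma ancn_eq n m x : x \in C -> (dep x <= n)%N -> (dep x <= m)%N ->
  ancn n x = ancn m x.
Proof.
elim: n m x => [|n IH] [|m] x xC hn hm //=.
- case: eqP => // /eqP xr.
  have : x \in C' by rewrite inC' xr.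
  by move/dep_pos; rewrite ltnNge hn.
- case: eqP => // /eqP xr.
  have : x \in C' by rewrite inC' xr.
  by move/dep_pos; rewrite ltnNge hm.
- case: eqP => // /eqP xr.
  have xC' : x \in C' by rewrite inC' xr.
  congr (_ :: _); apply: IH; first exact: Hpar.
    by have := Hdep xC'; move=> h; rewrite -ltnS; exact: leq_trans h hn.
  by have := Hdep xC'; move=> h; rewrite -ltnS; exact: leq_trans h hm.
Qed.

Lemma anc_r : anc r = [:: r].
Proof. by rewrite /anc; case: (dep r) => //= n; rewrite eqxx. Qed.

Lemma anc_cons x : x \in C' -> anc x = x :: anc (par x).
Proof.
move=> xC'; rewrite /anc; have := dep_pos xC'.
have := Hdep xC'.
case e: (dep x) => [|n] // hd _ /=.
move: xC'; rewrite inC' => /andP [xr xC].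
rewrite (negbTE xr); congr (_ :: _).
by apply: ancn_eq => //; apply: Hpar; rewrite inC' xr.
Qed.

Lemma anc_ind (P : U -> Prop) : P r ->
  (forall x, x \in C' -> P (par x) -> P x) -> forall x, x \in C -> P x.
Proof.
move=> Pr IH x; move: {2}(dep x) (leqnn (dep x)) => n.
elim: n x => [|n IHn] x hx xC.
- case: (x =P r) => [->//|/eqP xr].
  have xC' : x \in C' by rewrite inC' xr.
  by move: (dep_pos xC'); rewrite ltnNge hx.
- case: (x =P r) => [->//|/eqP xr].
  have xC' : x \in C' by rewrite inC' xr.
  apply: (IH _ xC'); apply: IHn; last exact: (Hpar xC').
  by have := Hdep xC'; move=> h; rewrite -ltnS; exact: leq_trans h hx.
Qed.

Lemma anc_head x : exists s, anc x = x :: s.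
Proof.
rewrite /anc; case: (dep x) => [|n] /=; first by exists [::].
by case: ifP => _; eexists.
Qed.

Lemma mem_anc_self x : x \in anc x.
Proof. by case: (anc_head x) => s ->; rewrite mem_head. Qed.

Lemma anc_memC x y : x \in C -> y \in anc x -> y \in C.
Proof.
move=> xC; move: x xC y.
apply: (@anc_ind (fun x => forall y, y \in anc x -> y \in C)).
  by move=> y; rewrite anc_r inE => /eqP ->.
move=> x xC' IH y; rewrite anc_cons // inE => /orP [/eqP ->|]; last exact: IH.
by move: xC'; rewrite inC' => /andP [].
Qed.

Lemma r_in_anc x : x \in C -> r \in anc x.
Proof.
move: x; apply: (@anc_ind (fun x => r \in anc x)); first by rewrite anc_r inE.
by move=> x xC' IH; rewrite anc_cons // inE IH orbT.
Qed.

Lemma anc_trans x y z : x \in C -> y \in anc x -> z \in anc y -> z \in anc x.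
Proof.
move=> xC; move: x xC y z.
apply: (@anc_ind (fun x => forall y z, y \in anc x -> z \in anc y -> z \in anc x)).
  by move=> y z; rewrite anc_r inE => /eqP ->; rewrite anc_r.
move=> x xC' IH y z; rewrite (anc_cons xC') inE => /orP [/eqP ->|].
  by rewrite (anc_cons xC').
by move=> hy hz; rewrite inE (IH _ _ hy hz) orbT.
Qed.

Lemma dep_anc x y : x \in C -> y \in anc x -> (dep y <= dep x)%N.
Proof.
move=> xC; move: x xC y.
apply: (@anc_ind (fun x => forall y, y \in anc x -> (dep y <= dep x)%N)).
  by move=> y; rewrite anc_r inE => /eqP ->.
move=> x xC' IH y; rewrite (anc_cons xC') inE => /orP [/eqP ->//|/IH h].
exact: (leq_trans h (ltnW (Hdep xC'))).
Qed.

Lemma par_anc x : x \in C' -> par x \in anc x.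
Proof. by move=> xC'; rewrite anc_cons // inE mem_anc_self orbT. Qed.

Lemma notin_anc_par x : x \in C' -> x \notin anc (par x).
Proof.
move=> xC'; apply/negP => /(dep_anc (Hpar xC')).
by rewrite leqNgt Hdep.
Qed.

Lemma par_neq x : x \in C' -> par x != x.
Proof. by move=> xC'; apply/eqP => h; have := Hdep xC'; rewrite h ltnn. Qed.

Lemma anc_uniq x : x \in C -> uniq (anc x).
Proof.
move: x; apply: (@anc_ind (fun x => uniq (anc x))); first by rewrite anc_r.
by move=> x xC' IH; rewrite anc_cons //= IH notin_anc_par.
Qed.

Lemma anc_chain x y z : x \in C -> y \in anc x -> z \in anc x ->
  (y \in anc z) || (z \in anc y).
Proof.
move=> xC; move: x xC y z.
apply: (@anc_ind (fun x => forall y z, y \in anc x -> z \in anc x ->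
  (y \in anc z) || (z \in anc y))).
  by move=> y z; rewrite anc_r !inE => /eqP -> /eqP ->; rewrite mem_anc_self.
move=> x xC' IH y z; rewrite (anc_cons xC') !inE.
case/orP => [/eqP ->|hy]; case/orP => [/eqP ->|hz].
- by rewrite mem_anc_self.
- by rewrite (anc_cons xC') inE hz orbT orbT.
- by rewrite (anc_cons xC') inE hy orbT.
- exact: IH.
Qed.

Lemma same_par x c u : x \in C -> c \in anc x -> u \in anc x ->
  c \in C' -> u \in C' -> par c = par u -> c = u.
Proof.
move=> xC cx ux cC uC pe.
case/orP: (anc_chain xC cx ux) => h.
  case: (c =P u) => // /eqP cu.
  move: h; rewrite (anc_cons uC) inE (negbTE cu) /= -pe => h.
  by move: (notin_anc_par cC); rewrite h.
case: (u =P c) => [->//|/eqP uc].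
move: h; rewrite (anc_cons cC) inE (negbTE uc) /= pe => h.
by move: (notin_anc_par uC); rewrite h.
Qed.

Lemma child_exists x w : x \in C -> w \in anc x -> w != x ->
  exists2 c, c \in anc x & (c \in C') && (par c == w).
Proof.
move=> xC; move: x xC w.
apply: (@anc_ind (fun x => forall w, w \in anc x -> w != x ->
  exists2 c, c \in anc x & (c \in C') && (par c == w))).
  by move=> w; rewrite anc_r inE => /eqP ->; rewrite eqxx.
move=> x xC' IH w; rewrite (anc_cons xC') inE => /orP [/eqP -> |hw]; first by rewrite eqxx.
move=> _; case: (w =P par x) => [->|/eqP wp].
  by exists x; [rewrite inE eqxx | rewrite xC' eqxx].
have [c hc hc2] := IH w hw wp.
by exists c => //; rewrite inE hc orbT.
Qed.

Lemma edge_inj : {in C' &, injective (fun x => [set x; par x])}.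
Proof.
move=> x y xC yC /= E.
have xp : x != par x by rewrite eq_sym par_neq.
case: (set2_cases xp E) => [[]//|[h1 h2]].
have := Hdep xC; have := Hdep yC; rewrite -h1 h2 => h3 h4.
by have := ltn_trans h3 h4; rewrite ltnn.
Qed.

Lemma edgeP x y : [set x; y] \in dE t ->
  ((x \in C') && (y == par x)) || ((y \in C') && (x == par y)).
Proof.
rewrite HE => /imsetP [w wC E].
case: (x =P y) => [exy|/eqP xy].
  subst y; have : par w \in [set x; x] by rewrite E set22.
  have : w \in [set x; x] by rewrite E set21.
  rewrite !inE !orbb => /eqP hw /eqP h.
  by move: (par_neq wC); rewrite h hw eqxx.
case: (set2_cases xy E) => [[-> ->]|[-> ->]].
  by rewrite wC eqxx.
by rewrite wC eqxx orbT.
Qed.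

Lemma pe_anc x : x \in C' ->
  path_edges (anc x) = [set x; par x] :: path_edges (anc (par x)).
Proof.
move=> xC; rewrite anc_cons //; case: (anc_head (par x)) => s e.
by rewrite e pe_cons2.
Qed.

Lemma mem_pe_anc x c : x \in C -> c \in C' ->
  ([set c; par c] \in path_edges (anc x)) = (c \in anc x).
Proof.
move=> xC cC; move: x xC.
apply: (@anc_ind (fun x => ([set c; par c] \in path_edges (anc x)) = (c \in anc x))).
  rewrite anc_r inE /=; apply/esym/negbTE.
  by move: cC; rewrite inC' => /andP [].
move=> x xC' IH; rewrite pe_anc // (anc_cons xC') !inE IH; congr (_ || _).
by apply/eqP/eqP => [h|->//]; apply: edge_inj.
Qed.

Lemma pe_anc_dE x : x \in C -> all (fun e => e \in dE t) (path_edges (anc x)).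
Proof.
move: x; apply: (@anc_ind (fun x => all (fun e => e \in dE t) (path_edges (anc x)))).
  by rewrite anc_r.
move=> x xC' IH; rewrite pe_anc //=; rewrite IH andbT HE.
by apply/imsetP; exists x.
Qed.

Lemma pe_anc_uniq x : x \in C -> uniq (path_edges (anc x)).
Proof.
move: x; apply: (@anc_ind (fun x => uniq (path_edges (anc x)))).
  by rewrite anc_r.
move=> x xC' IH; rewrite pe_anc // cons_uniq IH andbT mem_pe_anc //.
  exact: notin_anc_par.
exact: Hpar.
Qed.

Lemma last_anc x : x \in C -> forall d, last d (anc x) = r.
Proof.
move: x; apply: (@anc_ind (fun x => forall d, last d (anc x) = r)).
  by move=> d; rewrite anc_r.
by move=> x xC' IH d; rewrite (anc_cons xC') /=; apply: IH.
Qed.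

Lemma anc_path x : x \in C -> is_path t x r (anc x).
Proof.
move=> xC; case: (anc_head x) => s e.
have hl : last x s = r by have := last_anc xC x; rewrite e.
rewrite e is_path_cons eqxx -e hl eqxx.
rewrite pe_anc_dE // pe_anc_uniq // !andbT andTb.
by apply/allP => z; apply: anc_memC.
Qed.

Lemma trail_down s x0 x1 :
  all (fun z => z \in C) [:: x0, x1 & s] ->
  all (fun e => e \in dE t) (path_edges [:: x0, x1 & s]) ->
  uniq (path_edges [:: x0, x1 & s]) -> x1 \in C' -> par x1 = x0 ->
  x1 \in anc (last x1 s).
Proof.
elim: s x0 x1 => [|x2 s IH] x0 x1 hC hE hU x1C px1.
  by rewrite /= mem_anc_self.
move: hE hU; rewrite !pe_cons2 => /andP [_ /andP [e12 hE]].
rewrite cons_uniq => /andP [hn hU].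
case/orP: (edgeP e12) => /andP [x2C /eqP x1p].
  by move: hn; rewrite inE x1p px1 [[set x1; x0]]setUC eqxx.
have hl : last x2 s \in C.
  move: hC => /andP [_ /andP [_ hC]].
  have : last x2 s \in x2 :: s by exact: mem_last.
  by move: hC; rewrite /= => /andP [h1 /allP h2]; rewrite inE => /orP [/eqP ->//|/h2].
have h2 : x2 \in anc (last x2 s).
  apply: (IH x1 x2) => //; first by case/andP: hC.
    by rewrite pe_cons2 /= e12.
rewrite /= x1p; apply: (anc_trans hl h2); exact: par_anc.
Qed.

Lemma anc_unique s x : is_path t x r (x :: s) -> x :: s = anc x.
Proof.
elim: s x => [|y s IH] x.
  by rewrite is_path_cons => /and5P [_ /eqP /= xr _ _ _]; rewrite xr anc_r.
rewrite is_path_cons => /and5P [_ hl hC hE hU].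
move: (hE); rewrite pe_cons2 => /andP [hxy hE'].
case/orP: (edgeP hxy) => /andP [hA /eqP hB].
  have hp : is_path t y r (y :: s).
    rewrite is_path_cons; apply/and5P; split => //.
    - by case/andP: hC.
    - by move: hU; rewrite pe_cons2 cons_uniq => /andP [_ ->].
  by rewrite (IH _ hp) hB (anc_cons hA).
have := trail_down hC hE hU hA (esym hB).
have hl' : last y s = r := eqP hl.
by rewrite hl' anc_r inE => /eqP yr; move: hA; rewrite yr inC' eqxx.
Qed.

Lemma gamma_anc x : x \in C -> gamma t x r = anc x.
Proof.
move=> xC; rewrite /gamma.
have := epsilon_spec (inhabits [::]) (fun p => is_path t x r p)
  (ex_intro _ (anc x) (anc_path xC)).
case: (epsilon _ _) => [|x0 s] //.
move=> hp; have := hp; rewrite is_path_cons => /andP [/eqP e _].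
by move: hp; rewrite e; apply: anc_unique.
Qed.

Local Open Scope ring_scope.
Definition gp c := dq t [set c; par c] (par c).
Definition Kset v := [set c in C' | (par c \in anc v) && (c \notin anc v)].
Definition xg v : int := \prod_(c in Kset v) gp c.

Lemma exists_set2 (p : pred U) a b :
  [exists u in [set a; b], p u] = p a || p b.
Proof.
apply/existsP/orP => [[u /andP []]|[h|h]].
- by rewrite !inE => /orP [] /eqP ->; auto.
- by exists a; rewrite set21.
- by exists b; rewrite set22.
Qed.

Lemma incident_anc v c : v \in C -> c \in C' ->
  incident t [set c; par c] (anc v) = (par c \in anc v) && (c \notin anc v).
Proof.
move=> vC cC; rewrite /incident mem_pe_anc // exists_set2.
have -> : [set c; par c] \in dE t by rewrite HE; apply/imsetP; exists c.
by case: (c \in anc v); case: (par c \in anc v).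
Qed.

Lemma qpath_anc v c : v \in C -> c \in C' -> par c \in anc v ->
  c \notin anc v -> q_path t [set c; par c] (anc v) = gp c.
Proof.
move=> vC cC pv cv; rewrite /q_path.
case: pickP => [u /andP []|h].
  by rewrite !inE => /orP [] /eqP -> // hc; move: cv; rewrite hc.
by move: (h (par c)); rewrite set22 pv.
Qed.

Lemma prod_incident v : v \in C ->
  \prod_(e in dE t | incident t e (gamma t v r)) q_path t e (gamma t v r) = xg v.
Proof.
move=> vC; rewrite gamma_anc // HE big_mkcondr big_imset /=; last first.
  by move=> x y xC yC; apply: edge_inj.
rewrite /xg /Kset.
rewrite [RHS](eq_bigl (fun c => (c \in C') && ((par c \in anc v) && (c \notin anc v))));
  last by move=> c; rewrite inE.
rewrite [RHS]big_mkcondr; apply: eq_bigr => c cC.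
rewrite incident_anc //; case: ifP => // /andP [h1 h2].
exact: qpath_anc.
Qed.

Definition ch w := [set c in C' | par c == w].

Lemma valencyE w : valency t w = ((w \in C') + #|ch w|)%N.
Proof.
rewrite /valency HE imset_filter card_in_imset; last first.
  by move=> x y /setIdP [xC _] /setIdP [yC _]; apply: edge_inj.
rewrite (cardsD1 w); congr (_ + _)%N.
  by rewrite in_set set21 andbT.
apply: eq_card => c; apply/idP/idP.
  move=> /setD1P [cw /setIdP [cC hw]]; apply/setIdP; split => //.
  by move: hw; rewrite in_set2 (eq_sym w c) (negbTE cw) /= eq_sym.
move=> /setIdP [cC /eqP pc]; apply/setD1P; split.
  by apply/eqP => cw; move: (par_neq cC); rewrite pc cw eqxx.
by apply/setIdP; split => //; rewrite -pc set22.
Qed.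

Definition Pp w := \prod_(c in ch w) gp c.
Definition Pq v := \prod_(c in ch (par v) :\ v) gp c.
Definition Dd v := \prod_(c in Kset v | par c != v) gp c.
Definition Ee w : int := Pp w * (#|ch w|)%:R - \sum_(v in ch w) Pq v - Pp w + 1.

Lemma xgPD v : xg v = Pp v * Dd v.
Proof.
rewrite /xg (bigID (fun c => par c == v)) /=; congr (_ * _).
apply: eq_bigl => c; apply/idP/idP.
  by move=> /andP [/setIdP [cC _] pc]; apply/setIdP.
move=> /setIdP [cC /eqP pc]; rewrite pc eqxx andbT; apply/setIdP; split => //.
by rewrite -pc mem_anc_self /=; exact: notin_anc_par.
Qed.

Lemma Drec v : v \in C' -> Dd v = Pq v * Dd (par v).
Proof.
move=> vC; rewrite /Dd (bigID (fun c => par c == par v)) /=; congr (_ * _).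
  apply: eq_bigl => c; apply/idP/idP.
    move=> /andP [/andP [/setIdP [cC /andP [_ cv]] _] /eqP pc].
    apply/setD1P; split; last by apply/setIdP; split => //; exact/eqP.
    by apply/eqP => e; move: cv; rewrite e mem_anc_self.
  move=> /setD1P [cv /setIdP [cC /eqP pc]]; rewrite pc eqxx andbT.
  apply/andP; split; last exact: par_neq vC.
  apply/setIdP; split => //; rewrite pc par_anc //=.
  rewrite (anc_cons vC) in_cons negb_or cv /= -pc; exact: notin_anc_par.
apply: eq_bigl => c; case e: (par c == par v); rewrite ?andbF ?andbT //.
apply/idP/idP.
  move=> /andP [/setIdP [cC /andP [pcv cv]] pv]; apply/setIdP; split => //.
  move: pcv cv; rewrite (anc_cons vC) !in_cons (negbTE pv) /= negb_or.
  by move=> -> /andP [_ ->].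
move=> /setIdP [cC /andP [pcv cv]].
have pv : par c != v.
  by apply/eqP => h; move: pcv; rewrite h => hv; move: (notin_anc_par vC); rewrite hv.
rewrite pv andbT; apply/setIdP; split => //.
rewrite (anc_cons vC) !in_cons pcv orbT /= negb_or cv andbT.
by apply/eqP => h; move: e; rewrite h eqxx.
Qed.

Lemma Dd_r : Dd r = 1.
Proof.
rewrite /Dd big1 // => c /andP [/setIdP [_ /andP [pc _]]].
by move: pc; rewrite anc_r mem_seq1 => /eqP ->; rewrite eqxx.
Qed.

Lemma sum_ch (F : U -> int) :
  \sum_(w in C') \sum_(v in ch w) F v = \sum_(v in C' | par v != r) F v.
Proof.
rewrite [RHS](partition_big par (fun w => w \in C')) /=; last first.
  by move=> v /andP [vC pv]; rewrite inC' pv Hpar.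
apply: eq_bigr => w wC; apply: eq_bigl => v; apply/idP/idP.
  move=> /setIdP [vC /eqP pv]; rewrite vC pv eqxx andbT /=.
  by move: wC; rewrite inC' => /andP [].
by move=> /andP [/andP [vC _] pvw]; apply/setIdP.
Qed.

Lemma L1 : \sum_(w in C') xg w * ((#|ch w|)%:R - 1) =
  - \sum_(v in ch r) Dd v + \sum_(w in C') Dd w * Ee w.
Proof.
have e1 : \sum_(w in C') Dd w * \sum_(v in ch w) Pq v =
          \sum_(v in C' | par v != r) Dd v.
  rewrite -sum_ch; apply: eq_bigr => w wC; rewrite big_distrr /=.
  by apply: eq_bigr => v /setIdP [vC /eqP pv]; rewrite (Drec vC) pv mulrC.
have e2 : \sum_(w in C') Dd w =
          \sum_(v in C' | par v != r) Dd v + \sum_(v in ch r) Dd v.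
  rewrite (bigID (fun v => par v != r)) /=; congr (_ + _).
  by apply: eq_bigl => v; rewrite negbK; apply/andP/setIdP.
have e3 : \sum_(w in C') Dd w * Ee w =
   \sum_(w in C') xg w * ((#|ch w|)%:R - 1)
   - \sum_(w in C') Dd w * \sum_(v in ch w) Pq v + \sum_(w in C') Dd w.
  rewrite -sumrB -big_split /=; apply: eq_bigr => w wC.
  by rewrite xgPD /Ee; ring.
by rewrite e3 e1 e2; ring.
Qed.

Lemma sum_prod_minus (O : {set U}) (h : U -> int) :
  (#|[set o in O | h o != 1]| <= 1)%N ->
  \sum_(o in O) \prod_(o' in O :\ o) h o' =
  (#|O|)%:R * \prod_(o in O) h o + 1 - \prod_(o in O) h o.
Proof.
move=> hc; case: (set_0Vmem [set o in O | h o != 1]) => [H0|[o0 ho0]].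
  have h1 : forall o, o \in O -> h o = 1.
    move=> o oO; apply/eqP; apply/negPn/negP => ho.
    have : o \in [set o in O | h o != 1] by apply/setIdP.
    by rewrite H0 inE.
  have hO : \prod_(o in O) h o = 1 by apply: big1.
  rewrite hO (eq_bigr (fun _ => 1)) ?sumr_const; last first.
    by move=> o oO; apply: big1 => o' /setD1P [_ /h1].
  by rewrite mulr1 addrK.
move: (ho0) => /setIdP [o0O h0].
have huniq : forall o, o \in O -> h o != 1 -> o = o0.
  move=> o oO ho; move/card_le1_eqP: hc; apply => //; by apply/setIdP.
have hP : forall S : {set U}, S \subset O -> o0 \notin S -> \prod_(o in S) h o = 1.
  move=> S /subsetP SO nS; apply: big1 => o oS; apply/eqP; apply/negPn/negP => ho.
  by move: nS; rewrite -(huniq o (SO _ oS) ho) oS.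
have hsub : forall S : {set U}, S \subset O -> forall x, S :\ x \subset O.
  by move=> S SO x; apply: subset_trans SO; apply: subsetDl.
rewrite (big_setD1 o0 o0O) /= (hP (O :\ o0)) ?subsetDl ?setD11 //.
rewrite [\prod_(o in O) h o](big_setD1 o0 o0O) /= (hP (O :\ o0)) ?subsetDl ?setD11 // mulr1.
rewrite (eq_bigr (fun _ => h o0)); last first.
  move=> o /setD1P [oo oO]; rewrite (big_setD1 o0) /=; last first.
    by apply/setD1P; split => //; rewrite eq_sym.
  rewrite hP ?mulr1 //; first by do 2 apply: subset_trans (subsetDl _ _).
  by rewrite !inE eqxx.
rewrite sumr_const (cardsD1 o0 O) o0O -[h o0 *+ _]mulr_natl.
change (true + #|O :\ o0|)%N with (1 + #|O :\ o0|)%N.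
rewrite natrD; ring.
Qed.

Lemma Ee0 w : (#|[set c in ch w | gp c != 1]| <= 1)%N -> Ee w = 0.
Proof.
move=> hc; have hs : \sum_(v in ch w) Pq v = \sum_(v in ch w) \prod_(c in ch w :\ v) gp c.
  by apply: eq_bigr => v /setIdP [_ /eqP pv]; rewrite /Pq pv.
by rewrite /Ee hs sum_prod_minus // /Pp; ring.
Qed.

Lemma Ee_spine w s : s \in ch w -> (#|[set c in ch w :\ s | gp c != 1]| <= 1)%N ->
  Ee w = (gp s - 1) * (\prod_(c in ch w :\ s) gp c - 1).
Proof.
move=> sw hc; have ps : par s = w by move: sw => /setIdP [_ /eqP].
have hsum : \sum_(v in ch w) Pq v = \prod_(c in ch w :\ s) gp c +
    gp s * \sum_(o in ch w :\ s) \prod_(c in (ch w :\ s) :\ o) gp c.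
  rewrite (big_setD1 s sw) /=; congr (_ + _); first by rewrite /Pq ps.
  rewrite big_distrr; apply: eq_bigr => o /setD1P [os ow] /=.
  have po : par o = w by move: ow => /setIdP [_ /eqP].
  rewrite /Pq po (big_setD1 s) /=; last by apply/setD1P; split => //; rewrite eq_sym.
  congr (_ * _); apply: eq_bigl => c; rewrite !in_setD1.
  by rewrite andbCA.
rewrite /Ee hsum sum_prod_minus // /Pp (big_setD1 s sw) /= (cardsD1 s (ch w)) sw.
change (true + #|ch w :\ s|)%N with (1 + #|ch w :\ s|)%N.
rewrite natrD; ring.
Qed.

Lemma prod_edges_at (Pe : pred {set U}) x u : x \in C -> u \in anc x ->
  (forall c, c \in C' -> Pe [set c; par c] = (c \in anc x)) ->
  \prod_(e in dE t | (u \in e) && ~~ Pe e) dq t e u =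
  \prod_(c in ch u | c \notin anc x) gp c.
Proof.
move=> xC ux hPe; rewrite HE big_mkcondr big_imset /=; last first.
  by move=> ? ? ? ?; apply: edge_inj.
rewrite [RHS](eq_bigl (fun c => (c \in C') && ((par c == u) && (c \notin anc x))));
  last first.
  move=> c; apply/andP/andP => [[/setIdP [h1 h2] h3]|[h1 /andP [h2 h3]]].
    by split => //; apply/andP.
  by split => //; apply/setIdP.
rewrite [RHS]big_mkcondr; apply: eq_bigr => c cC; rewrite hPe // in_set2.
case: (c =P u) => [cu|/eqP cu].
  subst c; rewrite eqxx ux /= andbF.
  by [].
rewrite (eq_sym u c) (negbTE cu) /= (eq_sym u).
by case: (par c =P u) => [pu|] //=; rewrite /gp pu.
Qed.

Section Spine.
Variable v0 : U.
Hypothesis Hv0 : v0 \in C'.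
Hypothesis H1 : forall w, w \in C ->
  (#|[set c in ch w | (c \notin anc v0) && (gp c != 1)]| <= 1)%N.
Hypothesis H2 : forall c, c \in ch r -> c \in anc v0.

Lemma v0C : v0 \in C.
Proof. by move: Hv0; rewrite inC' => /andP []. Qed.

Lemma ch_r_sum : \sum_(v in ch r) Dd v = 1.
Proof.
have rv : r != v0 by move: Hv0; rewrite inC' eq_sym => /andP [].
have [c0 c0a /andP [c0C /eqP pc0]] := child_exists v0C (r_in_anc v0C) rv.
have e : ch r = [set c0].
  apply/setP => c; rewrite in_set1; apply/idP/eqP.
    move=> cr; have ca := H2 cr; move: cr => /setIdP [cC /eqP pc].
    by apply: (same_par v0C ca c0a cC c0C); rewrite pc pc0.
  by move->; apply/setIdP; split => //; rewrite pc0.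
rewrite e big_set1 (Drec c0C) pc0 Dd_r mulr1 /Pq pc0 e setDv.
by rewrite big_set0.
Qed.

Lemma Ee_off w : w \in C -> (w \notin anc v0) || (w == v0) -> Ee w = 0.
Proof.
move=> wC hw; apply: Ee0; apply: leq_trans (H1 wC).
apply: subset_leq_card; apply/subsetP => c /setIdP [cw gc].
apply/setIdP; split => //; rewrite gc andbT.
move: cw => /setIdP [cC /eqP pc]; apply/negP => ca.
case/orP: hw => [wn|/eqP wv].
  by move: wn; rewrite -pc (anc_trans v0C ca (par_anc cC)).
by move: (notin_anc_par cC); rewrite pc wv ca.
Qed.

Lemma S_formula : \sum_(w in C') xg w * ((#|ch w|)%:R - 1) =
  -1 + \sum_(w in C' | (w \in anc v0) && (w != v0)) Dd w * Ee w.
Proof.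
rewrite L1 ch_r_sum; congr (_ + _).
rewrite (bigID (fun w => (w \in anc v0) && (w != v0))) /=.
rewrite [X in _ + X]big1 ?addr0 // => w /andP [wC].
rewrite negb_and negbK => h; rewrite Ee_off ?mulr0 //.
by move: wC; rewrite inC' => /andP [].
Qed.

Definition bb w := \prod_(c in ch w | c \notin anc v0) gp c.

Lemma ch_spine_eq w s : s \in anc v0 -> s \in C' -> par s = w ->
  forall c, (c \in ch w :\ s) = (c \in ch w) && (c \notin anc v0).
Proof.
move=> sa sC ps c; apply/idP/idP.
  move=> /setD1P [cs cw]; rewrite cw /=; apply/negP => ca.
  move: cw => /setIdP [cC /eqP pc].
  by move: cs; rewrite (same_par v0C ca sa cC sC) ?eqxx // pc ps.
move=> /andP [cw cn]; apply/setD1P; split => //.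
by apply/eqP => e; move: cn; rewrite e sa.
Qed.

Lemma Ee_spine' w s : w \in anc v0 -> s \in anc v0 -> s \in C' -> par s = w ->
  Ee w = (gp s - 1) * (bb w - 1).
Proof.
move=> wa sa sC ps.
have sw : s \in ch w by apply/setIdP; split => //; apply/eqP.
rewrite (Ee_spine sw); last first.
  apply: leq_trans (H1 (anc_memC v0C wa)).
  apply: subset_leq_card; apply/subsetP => c /setIdP [cw gc].
  by apply/setIdP; split; [|rewrite gc andbT]; move: cw; rewrite (ch_spine_eq sa sC ps);
    case/andP.
congr (_ * (_ - 1)); rewrite /bb; apply: eq_bigl => c.
exact: ch_spine_eq.
Qed.

Lemma Dd_spine w : w \in C' -> w \in anc v0 -> Dd w = bb (par w) * Dd (par w).
Proof.
move=> wC wa; rewrite Drec //; congr (_ * _); rewrite /Pq /bb.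
by apply: eq_bigl => c; exact: ch_spine_eq.
Qed.

End Spine.

End Rooted.


Section Paths.
Variables (U : finType) (t : dtree U).
Local Notation C := (cells t).

Lemma pe_mem (s : seq U) e u : e \in path_edges s -> u \in e -> u \in s.
Proof.
elim: s => [|x s IH] //; case: s IH => [|y s] IH //.
rewrite pe_cons2 in_cons => /orP [/eqP -> | he] hu.
  by move: hu; rewrite in_set2 !in_cons => /orP [] ->; rewrite ?orbT.
by rewrite in_cons (IH he hu) orbT.
Qed.

Lemma is_path_tail x z y s : is_path t x z [:: x, y & s] -> is_path t y z (y :: s).
Proof.
rewrite !is_path_cons => /and5P [_ hl hC hE hU].
apply/and5P; split => //.
- by case/andP: hC.
- by move: hE; rewrite pe_cons2 => /andP [].
- by move: hU; rewrite pe_cons2 cons_uniq => /andP [].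
Qed.

Lemma is_path_suffix s : forall x z u, is_path t x z (x :: s) -> u \in x :: s ->
  exists s2, is_path t u z (u :: s2) /\ (size s2 <= size s)%N.
Proof.
elim: s => [|y s IH] x z u hp.
  by rewrite mem_seq1 => /eqP ->; exists [::].
rewrite in_cons => /orP [/eqP ->|hu]; first by exists (y :: s).
have [s2 [h1 h2]] := IH _ _ _ (is_path_tail hp) hu.
by exists s2; split => //; apply: leq_trans h2 _.
Qed.

Lemma pe_rcons (x : U) s y :
  path_edges (rcons (x :: s) y) = rcons (path_edges (x :: s)) [set last x s; y].
Proof.
elim: s x => [|z s IH] x; first by [].
by rewrite rcons_cons [rcons (z :: s) y]rcons_cons pe_cons2 -rcons_cons IH
  pe_cons2 rcons_cons.
Qed.

Lemma rev_form (x0 : U) s : rev (x0 :: s) = last x0 s :: rev (belast x0 s) /\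
  last (last x0 s) (rev (belast x0 s)) = x0.
Proof.
split; first by rewrite lastI rev_rcons.
by case: s => [|y s] //=; rewrite rev_cons last_rcons.
Qed.

Lemma pe_rev (s : seq U) : path_edges (rev s) = rev (path_edges s).
Proof.
elim: s => [|x s IH] //; case: s IH => [|y s] IH; first by [].
rewrite rev_cons; have [e1 e2] := rev_form y s.
rewrite e1 pe_rcons -e1 IH pe_cons2 rev_cons; congr rcons.
by rewrite e2 setUC.
Qed.

Lemma is_path_rev x z s : is_path t x z s -> is_path t z x (rev s).
Proof.
case: s => [|x0 s] //; have [e1 e2] := rev_form x0 s.
rewrite e1 !is_path_cons -e1 => /and5P [/eqP hx /eqP hz hC hE hU].
rewrite hz eqxx -hz e2 hx eqxx all_rev pe_rev all_rev rev_uniq.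
by rewrite -hx hC hE hU.
Qed.

Section Tree.
Hypothesis Htree : is_tree t.

Lemma tree_uniq x y p p' : is_path t x y p -> is_path t x y p' -> p = p'.
Proof.
case: p => [|x0 s] // hp hp'.
have hx : x \in C.
  by move: hp; rewrite is_path_cons => /and5P [/eqP <- _ /andP [] ].
have hy : y \in C.
  move: hp; rewrite is_path_cons => /and5P [_ /eqP <- /allP hC _ _].
  by apply: hC; exact: mem_last.
have [q [_ hq]] := Htree.2 x y hx hy.
by rewrite (hq _ hp) (hq _ hp').
Qed.

Lemma gamma_eq x y p : is_path t x y p -> gamma t x y = p.
Proof.
move=> hp; rewrite /gamma.
have := epsilon_spec (inhabits [::]) (fun p => is_path t x y p) (ex_intro _ p hp).
by move=> h; exact: tree_uniq h hp.
Qed.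

Lemma gamma_spec x y : x \in C -> y \in C -> is_path t x y (gamma t x y).
Proof.
move=> hx hy; have [q [hq _]] := Htree.2 x y hx hy.
by rewrite (gamma_eq hq).
Qed.

Lemma head_nodup x y s : is_path t x y (x :: s) -> x \notin s.
Proof.
case: s => [|z s] // hp; apply/negP => hxs.
have [s2 [h1 h2]] := is_path_suffix (is_path_tail hp) hxs.
have := tree_uniq h1 hp; case => e; move: h2; rewrite e /=.
by rewrite ltnn.
Qed.

Lemma edge_first x y s u : is_path t x y (x :: s) ->
  [set x; u] \in path_edges (x :: s) -> exists s', s = u :: s'.
Proof.
case: s => [|z s] // hp; rewrite pe_cons2 in_cons => /orP [/eqP e|h].
  have xz : x != z by move: (head_nodup hp); rewrite in_cons negb_or => /andP [].
  have : u \in [set x; z] by rewrite -e set22.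
  rewrite in_set2 => /orP [/eqP ux|/eqP ->]; last by exists s.
  have : z \in [set x; u] by rewrite e set22.
  by rewrite ux in_set2 orbb eq_sym (negbTE xz).
have : x \in z :: s by apply: (pe_mem h); rewrite set21.
by rewrite (negbTE (head_nodup hp)).
Qed.

Variable a : U.
Hypothesis Ha : a \in C.

Definition parT x := head x (behead (gamma t x a)).
Definition depT x := size (gamma t x a).

Lemma gT_head x : x \in C -> exists s, gamma t x a = x :: s.
Proof.
move=> xC; have := gamma_spec xC Ha; case: (gamma t x a) => [|x0 s] //.
by rewrite is_path_cons => /andP [/eqP -> _]; exists s.
Qed.

Lemma gT_cons x : x \in C :\ a -> gamma t x a = x :: gamma t (parT x) a /\ parT x \in C.
Proof.
rewrite inE => /andP [xa xC]; have hp := gamma_spec xC Ha.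
have [s e] := gT_head xC; rewrite /parT e /=; rewrite e in hp.
case: s e hp => [|y s] e hp.
  by move: hp; rewrite is_path_cons => /and5P [_ /eqP /= xa' _ _ _]; rewrite xa' in_set1 eqxx in xa.
have hp' := is_path_tail hp; rewrite /= (gamma_eq hp'); split => //.
by move: hp; rewrite is_path_cons => /and5P [_ _ /andP [_ /andP [] ] ].
Qed.

Lemma HparT x : x \in C :\ a -> parT x \in C.
Proof. by case/gT_cons. Qed.

Lemma HdepT x : x \in C :\ a -> (depT (parT x) < depT x)%N.
Proof. by case/gT_cons => e _; rewrite /depT e. Qed.

Lemma no_self_a s : is_path t a a (a :: s) -> s = [::].
Proof.
case: s => [|y s] // hp; have := head_nodup hp.
move: hp; rewrite is_path_cons => /and5P [_ /eqP hl _ _ _].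
have hl' : last y s = a := hl.
by have := mem_last y s; rewrite hl' => ->.
Qed.

Lemma HET : dE t = [set [set x; parT x] | x in C :\ a].
Proof.
apply/setP => e; apply/idP/imsetP.
  move=> eE; have [he2 heC] := Htree.1 e eE.
  move/eqP/cards2P: he2 => [x [y [xy exy]]]; subst e.
  have xC : x \in C by move/subsetP: heC; apply; rewrite set21.
  have yC : y \in C by move/subsetP: heC; apply; rewrite set22.
  have [s gs] := gT_head xC; have hp := gamma_spec xC Ha; rewrite gs in hp.
  case: (boolP ([set x; y] \in path_edges (x :: s))) => hin.
    have [s' es] := edge_first hp hin.
    have xa : x != a.
      apply/eqP => xa; move: hp; rewrite xa es => /no_self_a; done.
    exists x; first by rewrite in_setD1 xa xC.
    by rewrite /parT gs es.
  have hpy : is_path t y a [:: y, x & s].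
    move: hp; rewrite !is_path_cons => /and5P [_ hl hC hE hU].
    apply/and5P; split => //.
    - by apply/andP; split.
    - by rewrite pe_cons2; apply/andP; split => //; rewrite setUC.
    - by rewrite pe_cons2 cons_uniq hU andbT setUC.
  have ya : y != a.
    by apply/eqP => ya; move: hpy; rewrite ya => /no_self_a.
  exists y; first by rewrite in_setD1 ya yC.
  by rewrite /parT (gamma_eq hpy) /= setUC.
case=> x xC ->; have [ge _] := gT_cons xC.
have [s gs] := gT_head (HparT xC).
move: xC; rewrite in_setD1 => /andP [_ xC].
have := gamma_spec xC Ha; rewrite ge gs is_path_cons pe_cons2.
by case/and5P => _ _ _ /andP [].
Qed.

End Tree.
End Paths.


Lemma interior_prod (U : finType) (F : U -> int) x s : uniq (x :: s) ->
  (\prod_(u <- behead (belast x s)) F u =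
   \prod_(u <- x :: s | (u != x) && (u != last x s)) F u)%R.
Proof.
case: s => [|y s] hu; first by rewrite /= big_cons !big_nil eqxx /=.
rewrite [behead _]/= [last _ _]/=.
have e : y :: s = rcons (belast y s) (last y s) := lastI y s.
rewrite e in hu *; set m := belast y s; set L := last y s.
rewrite big_cons eqxx /= big_rcons eqxx andbF Monoid.mulm1.
have hm : [seq u <- m | (u != x) && (u != L)] = m.
  apply/all_filterP/allP => u um.
  move: hu; rewrite /= rcons_uniq mem_rcons in_cons negb_or => /andP [/andP [xL xm] /andP [Lm _]].
  apply/andP; split; apply/eqP => h; subst u.
    by rewrite um in xm.
  by rewrite um in Lm.
by rewrite [RHS]/= -[RHS]big_filter hm.
Qed.

Section Main.
Variables (T : finType) (t : dtree T) (v0 a : T).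
Hypothesis dec : decorated t.
Hypothesis pr : pseudo_root t v0.
Hypothesis haA : a \in dA t :\: A0 t.

Local Notation C := (cells t).
Local Notation C' := (cells t :\ a).

Lemma Htree : is_tree t.
Proof. by case: dec. Qed.
Lemma disj : dV t :&: dA t = set0.
Proof. by case: dec. Qed.
Lemma val_arrow b : b \in dA t -> valency t b = 1%N.
Proof. by case: dec => _ _ h _ _; apply: h. Qed.
Lemma aA : a \in dA t.
Proof. by move: haA => /setDP []. Qed.
Lemma aC : a \in C.
Proof. by rewrite inE aA orbT. Qed.
Lemma notVA x : x \in dV t -> x \in dA t -> False.
Proof.
move=> h1 h2; have : x \in dV t :&: dA t by rewrite inE h1 h2.
by rewrite disj inE.
Qed.
Lemma v0V : v0 \in dV t.
Proof. by case: pr. Qed.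
Lemma v0C' : v0 \in C'.
Proof.
rewrite in_setD1 inE v0V andbT; apply/eqP => e.
by apply: (notVA v0V); rewrite e aA.
Qed.
Lemma v0CT : v0 \in C.
Proof. by rewrite inE v0V. Qed.

Local Notation par := (parT t a).
Local Notation dep := (depT t a).
Local Notation ancT := (anc a par dep).

Let Hp := HparT Htree aC.
Let Hd := HdepT Htree aC.
Let HE := HET Htree aC.

Lemma valT w : valency t w = ((w \in C') + #|ch t a par w|)%N.
Proof. exact: valencyE Hd HE w. Qed.

Lemma ch_arrow b : b \in dA t -> (#|ch t a par b| <= 1)%N.
Proof. by move=> bA; have := val_arrow bA; rewrite valT => <-; apply: leq_addl. Qed.

Lemma ch_a_sub x c : x \in C -> x != a -> c \in ch t a par a -> c \in ancT x.
Proof.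
move=> xC xa ca.
have ax : a != x by rewrite eq_sym.
have [c0 c0x /andP [c0C /eqP pc0]] := child_exists Hp Hd xC (r_in_anc Hp Hd xC) ax.
have c0a : c0 \in ch t a par a by apply/setIdP; split => //; apply/eqP.
by move/card_le1_eqP: (ch_arrow aA) => h; rewrite -(h c c0 ca c0a).
Qed.

Lemma v0a : v0 != a.
Proof. by move: v0C'; rewrite in_setD1 => /andP []. Qed.

Lemma H2T c : c \in ch t a par a -> c \in ancT v0.
Proof. exact: ch_a_sub v0CT v0a. Qed.

Lemma spine_V w : w \in ancT v0 -> w != a -> w \in dV t.
Proof.
move=> wa wa'; case: (w =P v0) => [->|/eqP wv]; first exact: v0V.
have wC : w \in C := anc_memC aC Hp Hd v0CT wa.
have [c ca /andP [cC /eqP pc]] := child_exists Hp Hd v0CT wa wv.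
have wC' : w \in C' by rewrite in_setD1 wa' wC.
move: (wC); rewrite inE => /orP [//|wA]; exfalso.
have cw : c \in ch t a par w by apply/setIdP; split => //; apply/eqP.
by have := val_arrow wA; rewrite valT wC' (cardsD1 c) cw.
Qed.

Lemma ch_arrow0 b : b \in dA t -> b != a -> #|ch t a par b| = 0%N.
Proof.
move=> bA ba; have bC' : b \in C' by rewrite in_setD1 ba inE bA orbT.
by have := val_arrow bA; rewrite valT bC' => /eqP; rewrite eqSS => /eqP.
Qed.

Lemma H1T w : w \in C ->
  (#|[set c in ch t a par w | (c \notin ancT v0) && (gp t par c != 1%R)]| <= 1)%N.
Proof.
move=> wC; move: (wC); rewrite inE => /orP [wV|wA]; last first.
  apply: leq_trans (ch_arrow wA); apply: subset_leq_card.
  by apply/subsetP => c /setIdP [].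
case: (w =P v0) => [wv|/eqP wv].
  subst w.
  have -> : [set c in ch t a par v0 | (c \notin ancT v0) && (gp t par c != 1%R)] = set0.
    apply/setP => c; rewrite in_set0; apply/negbTE/negP.
    move=> /setIdP [/setIdP [cC /eqP pc] /andP [_ gc]].
    move: gc; rewrite /gp pc; case: pr => _ hq _; rewrite hq ?eqxx //.
      by rewrite HE; apply/imsetP; exists c => //; rewrite pc.
    by rewrite set22.
  by rewrite cards0.
case: pr => _ _ hps; apply: leq_trans (hps w wV wv).
rewrite -(card_in_imset (f := fun c => [set c; par c])); last first.
  move=> x y /setIdP [/setIdP [xC _] _] /setIdP [/setIdP [yC _] _].
  exact: edge_inj Hd x y xC yC.
apply: subset_leq_card; apply/subsetP => e.
move=> /imsetP [c /setIdP [/setIdP [cC /eqP pc] /andP [cn gc]] ->].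
apply/setIdP; split.
  by rewrite HE; apply/imsetP; exists c.
rewrite -pc set22 /= gc andbT.
have hp := gamma_spec Htree wC v0CT.
rewrite pc (gamma_eq Htree (is_path_rev hp)) pe_rev mem_rev.
apply/negP => hin.
have [s gs] : exists s, gamma t w v0 = w :: s.
  move: hp; case: (gamma t w v0) => [|x0 s] //.
  by rewrite is_path_cons => /andP [/eqP -> _]; exists s.
rewrite gs in hp hin.
have hin' : [set w; c] \in path_edges (w :: s) by rewrite setUC.
have [s' es] := edge_first Htree hp hin'.
subst s; move: hp; rewrite is_path_cons => /and5P [_ /eqP hl hC hE hU].
have := trail_down Hp Hd HE hC hE hU cC pc.
have hl' : last c s' = v0 := hl.
by rewrite hl' (negbTE cn).
Qed.

Lemma Qstar_xg b : b \in dA t -> b != a ->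
  Qstar t (gamma t a b) = xg t a par dep b.
Proof.
move=> bA ba.
have bC' : b \in C' by rewrite in_setD1 ba inE bA orbT.
have bC : b \in C by move: bC'; rewrite in_setD1 => /andP [].
have hg : gamma t a b = rev (ancT b).
  have h1 := anc_path aC Hp Hd HE bC; have h2 := is_path_rev h1.
  exact: (gamma_eq Htree h2).
have hu : uniq (rev (ancT b)).
  by rewrite rev_uniq; have := anc_uniq Hp Hd bC.
rewrite hg; move: hu.
rewrite (anc_cons Hp Hd bC'); set s := ancT (par b).
have [e1 e2] := rev_form b s.
have hl : last b s = a.
  by have := last_anc Hp Hd bC b; rewrite (anc_cons Hp Hd bC').
rewrite hl in e1 e2; rewrite e1 => hu.
rewrite /Qstar interior_prod // e2 -e1 big_rev -(anc_cons Hp Hd bC').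
rewrite big_seq_cond.
rewrite (eq_bigr (fun u => \prod_(c in ch t a par u | c \notin ancT b) gp t par c)%R);
  last first.
  move=> u /andP [ub _]; rewrite /Qc.
  apply: (prod_edges_at Hd HE (Pe := fun e => e \in path_edges (rev (ancT b))) bC ub).
  by move=> c cC; rewrite /= pe_rev mem_rev (mem_pe_anc Hp Hd bC cC).
rewrite -big_filter big_uniq; last first.
  by apply: filter_uniq; have := anc_uniq Hp Hd bC.
rewrite /xg [RHS](partition_big par (fun u => u \in [seq x <- ancT b | (x \in ancT b) && ((x != a) && (x != b))])) /=;
  last first.
  move=> c /setIdP [cC /andP [pb cb]]; rewrite mem_filter pb /= andbT.
  apply/andP; split; apply/eqP => e.
    have : c \in ch t a par a by apply/setIdP; split => //; apply/eqP.
    by move/(ch_a_sub bC ba); rewrite (negbTE cb).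
  have : c \in ch t a par b by apply/setIdP; split => //; apply/eqP.
  by move=> hc; have := ch_arrow0 bA ba; rewrite (cardsD1 c) hc.
apply: eq_bigr => u; rewrite mem_filter => /andP [_ ub]; apply: eq_bigl => c.
apply/andP/andP => [[/setIdP [cC /eqP pc] cn]|[/setIdP [cC /andP [_ cn]] /eqP pc]].
  by split; [apply/setIdP; split => //; rewrite pc ub cn | rewrite pc].
by split => //; apply/setIdP; split => //; apply/eqP.
Qed.

Lemma ex_set1 (P : pred T) : [exists x in [set a], P x] = P a.
Proof.
apply/existsP/idP => [[x /andP [/set1P -> //]]|h].
by exists a; rewrite set11.
Qed.

Lemma gamma_v0a : gamma t v0 a = ancT v0.
Proof. by have := gamma_anc aC Hp Hd HE v0CT. Qed.

Local Notation TXV := (TXV t v0 [set a]).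
Local Notation TXE := (TXE t v0 [set a]).
Local Notation TXnew := (TXnew t v0 [set a]).
Local Notation bv := (bv t v0 [set a]).
Local Notation bbT := (bb t a par dep v0).

Lemma TXV_mem u : (u \in TXV) = (u \in ancT v0) && (u != a).
Proof.
rewrite /Defs.TXV inE ex_set1 gamma_v0a.
case ua: (u \in ancT v0); rewrite ?andbF ?andbT //=.
case: (u =P a) => [->|/eqP h]; last by rewrite spine_V.
by apply/negP => aV; apply: (notVA aV aA).
Qed.

Lemma TXE_mem c : c \in C' -> ([set c; par c] \in TXE) = (c \in ancT v0).
Proof.
move=> cC; rewrite /Defs.TXE inE ex_set1 gamma_v0a (mem_pe_anc Hp Hd v0CT cC).
have -> // : [set c; par c] \in dE t by rewrite HE; apply/imsetP; exists c.
Qed.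

Lemma bv_eq w : w \in ancT v0 -> bv w = bbT w.
Proof.
move=> wa; rewrite /Defs.bv /bb.
apply: (prod_edges_at Hd HE (Pe := fun e => e \in TXE) v0CT wa).
exact: TXE_mem.
Qed.

Lemma TXnew_mem u : (u \in TXnew) = [&& u \in ancT v0, u != a & bbT u != 1%R].
Proof.
rewrite /Defs.TXnew inE TXV_mem -andbA.
by case ua: (u \in ancT v0); rewrite //= bv_eq.
Qed.


Local Notation X := (TX t v0 [set a]).
Local Notation CX := (cells X).
Local Notation CX' := (cells X :\ inl a).

Definition parX (x : T + T) : T + T :=
  match x with inl u => inl (par u) | inr v => inl v end.
Definition depX (x : T + T) : nat :=
  match x with inl u => dep u | inr v => (dep v).+1 end.

Lemma inl_inj : injective (@inl T T). Proof. by move=> x y []. Qed.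
Lemma inr_inj : injective (@inr T T). Proof. by move=> x y []. Qed.

Lemma inl_notin_inr u (S : {set T}) : (inl u \in [set @inr T T v | v in S]) = false.
Proof. by apply/imsetP => [[v _]]. Qed.
Lemma inr_notin_inl u (S : {set T}) : (inr u \in [set @inl T T v | v in S]) = false.
Proof. by apply/imsetP => [[v _]]. Qed.

Lemma CX_inl u : (inl u \in CX) = (u \in ancT v0).
Proof.
rewrite /cells /= !inE (mem_imset _ _ inl_inj) (mem_imset _ _ inl_inj) inl_notin_inr.
rewrite TXV_mem in_set1 orbF.
case: (u =P a) => [->|/eqP ua]; last by rewrite andbT orbF.
by rewrite orbT (r_in_anc Hp Hd v0CT).
Qed.

Lemma CX_inr v : (inr v \in CX) = (v \in TXnew).
Proof.
by rewrite /cells /= !in_setU !inr_notin_inl (mem_imset _ _ inr_inj).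
Qed.

Lemma CX'_inl u : (inl u \in CX') = (u \in ancT v0) && (u != a).
Proof. by rewrite in_setD1 CX_inl andbC (inj_eq inl_inj). Qed.
Lemma CX'_inr v : (inr v \in CX') = (v \in TXnew).
Proof. by rewrite in_setD1 CX_inr. Qed.

Lemma spine_C' u : u \in ancT v0 -> u != a -> u \in C'.
Proof. by move=> ua ua'; rewrite in_setD1 ua' (anc_memC aC Hp Hd v0CT ua). Qed.

Lemma HrX : inl a \in CX.
Proof. by rewrite CX_inl (r_in_anc Hp Hd v0CT). Qed.

Lemma HpX x : x \in CX' -> parX x \in CX.
Proof.
case: x => [u|v]; rewrite ?CX'_inl ?CX'_inr /= CX_inl.
  move=> /andP [ua ua']; apply: (anc_trans Hp Hd v0CT ua).
  by have := par_anc Hp Hd (spine_C' ua ua').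
by rewrite TXnew_mem => /andP [].
Qed.

Lemma HdX x : x \in CX' -> (depX (parX x) < depX x)%N.
Proof.
case: x => [u|v]; rewrite ?CX'_inl ?CX'_inr //=.
by move=> /andP [ua ua']; apply: Hd (spine_C' ua ua').
Qed.

Lemma TXE_eq : TXE = [set [set c; par c] | c in [set c in C' | c \in ancT v0]].
Proof.
apply/setP => e; apply/idP/imsetP.
  move=> eT; move: (eT); rewrite /Defs.TXE inE => /andP [eE _].
  move: (eE); rewrite HE => /imsetP [c cC ec].
  exists c => //; apply/setIdP; split => //.
  by rewrite -(TXE_mem cC) -ec.
case=> c /setIdP [cC ca] ->; by rewrite TXE_mem.
Qed.

Lemma liftE2 (x y : T) : liftE [set x; y] = [set inl x; inl y].
Proof. by rewrite /liftE imsetU1 imset_set1. Qed.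

Lemma CX'_eq : CX' = [set inl x | x in [set c in C' | c \in ancT v0]] :|:
                      [set inr v | v in TXnew].
Proof.
apply/setP => x; rewrite in_setU; case: x => [u|v].
  rewrite CX'_inl (mem_imset _ _ inl_inj) inl_notin_inr orbF inE.
  case ua: (u \in ancT v0); last by rewrite !andbF.
  by rewrite andTb andbT in_setD1 (anc_memC aC Hp Hd v0CT ua) andbT.
by rewrite CX'_inr (mem_imset _ _ inr_inj) inr_notin_inl.
Qed.

Lemma HEX : dE X = [set [set x; parX x] | x in CX'].
Proof.
rewrite CX'_eq imsetU /= TXE_eq -imset_comp; congr (_ :|: _).
  rewrite -imset_comp; apply: eq_imset => c /=; exact: liftE2.
rewrite -imset_comp; apply: eq_imset => v /=; exact: setUC.
Qed.

Local Notation ancX := (anc (inl a) parX depX).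
Local Notation chX := (ch X (inl a) parX).
Local Notation gpX := (gp X parX).
Local Notation bbX := (bb X (inl a) parX depX (inl v0)).
Local Notation DdX := (Dd X (inl a) parX depX).
Local Notation EeX := (Ee X (inl a) parX).
Local Notation xgX := (xg X (inl a) parX depX).

Lemma ancX_eq u : u \in C -> u \in ancT v0 -> ancX (inl u) = map inl (ancT u).
Proof.
move=> uC; move: u uC.
apply: (anc_ind Hp Hd (P := fun u => u \in ancT v0 -> ancX (inl u) = map inl (ancT u))).
  by move=> _; rewrite !anc_r.
move=> u uC IH ua.
have ua' : u != a by move: uC; rewrite in_setD1 => /andP [].
have pua : par u \in ancT v0.
  by apply: (anc_trans Hp Hd v0CT ua); have := par_anc Hp Hd uC.
have uX : inl u \in CX' by rewrite CX'_inl ua ua'.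
rewrite (anc_cons HpX HdX uX) (anc_cons Hp Hd uC) /=.
by rewrite IH.
Qed.

Lemma memAncX x : (x \in ancX (inl v0)) =
  (match x with inl u => u \in ancT v0 | inr _ => false end).
Proof.
rewrite (ancX_eq v0CT (mem_anc_self _ _ _ _)).
case: x => [u|v]; first by rewrite (mem_map inl_inj).
by apply/mapP => [[u _]].
Qed.

Lemma gpX_inl c : gpX (inl c) = gp t par c.
Proof.
rewrite /gp /= /parX.
case: ifP => [/eqP e|_].
  have : inr (par c) \in [set inl c; @inl T T (par c)] by rewrite e set22.
  by rewrite in_set2.
congr dq; apply/setP => z; rewrite !inE.
by rewrite !(inj_eq inl_inj).
Qed.

Lemma gpX_inr v : gpX (inr v) = bv v.
Proof. by rewrite /gp /= setUC eqxx. Qed.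

Lemma TXnew_spine v : v \in TXnew -> (v \in ancT v0) && (v != a).
Proof. by rewrite TXnew_mem => /and3P [-> ->]. Qed.

Lemma chX_off w c : c \in chX w -> c \notin ancX (inl v0) ->
  exists2 u, w = inl u & c = inr u.
Proof.
move=> /setIdP [cX /eqP pc]; rewrite memAncX.
case: c cX pc => [c'|v] cX pc.
  by move: cX; rewrite CX'_inl => /andP [-> _].
by move=> _; exists v.
Qed.

Lemma H1X w : w \in CX ->
  (#|[set c in chX w | (c \notin ancX (inl v0)) && (gpX c != 1%R)]| <= 1)%N.
Proof.
move=> _; case: w => [u|u].
  apply: leq_trans (_ : #|[set @inr T T u]| <= 1)%N; last by rewrite cards1.
  apply: subset_leq_card; apply/subsetP => c /setIdP [cw /andP [cn _]].
  by have [u' [] <- ->] := chX_off cw cn; rewrite set11.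
rewrite (_ : [set c in _ | _] = set0) ?cards0 //.
apply/setP => c; rewrite in_set0; apply/negbTE/negP => /setIdP [cw /andP [cn _]].
by have [u' ] := chX_off cw cn.
Qed.

Lemma H2X c : c \in chX (inl a) -> c \in ancX (inl v0).
Proof.
move=> /setIdP [cX /eqP pc]; rewrite memAncX.
case: c cX pc => [c'|v] cX pc.
  by move: cX; rewrite CX'_inl => /andP [].
move: cX; rewrite CX'_inr => /TXnew_spine /andP [_ va].
by move: pc => [] e; rewrite e eqxx in va.
Qed.

Lemma Hv0X : inl v0 \in CX'.
Proof. by rewrite CX'_inl mem_anc_self v0a. Qed.

Lemma bbX_eq u : u \in ancT v0 -> bbX (inl u) = bbT u.
Proof.
move=> ua.
have e : bbX (inl u) = if u \in TXnew then bv u else 1%R.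
  rewrite /bb; case: ifP => hn.
    rewrite (eq_bigl (fun c => c == inr u)); first by rewrite big_pred1_eq gpX_inr.
    move=> c; apply/andP/eqP => [[cw cn]|->].
      by have [u' [] <- ->] := chX_off cw cn.
    split; last by rewrite memAncX.
    by apply/setIdP; split; rewrite ?CX'_inr //.
  rewrite big_pred0 // => c; apply/negbTE/negP => /andP [cw cn].
  have [u' [] eu ec] := chX_off cw cn; subst u' c.
  by move: cw => /setIdP [] ; rewrite CX'_inr hn.
rewrite e; case: ifP => hn; first by rewrite bv_eq.
case: (u =P a) => [ea|/eqP ua'].
  subst u; rewrite /bb big_pred0 // => c; apply/negbTE/negP => /andP [ca cn].
  by rewrite (H2T ca) in cn.
by move: hn; rewrite TXnew_mem ua ua' /= => /negbFE /eqP ->.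
Qed.

Lemma DdX_eq u : u \in C -> u \in ancT v0 -> DdX (inl u) = Dd t a par dep u.
Proof.
move=> uC; move: u uC.
apply: (anc_ind Hp Hd (P := fun u => u \in ancT v0 -> DdX (inl u) = Dd t a par dep u)).
  by move=> _; rewrite !Dd_r.
move=> u uC IH ua.
have ua' : u != a by move: uC; rewrite in_setD1 => /andP [].
have pua : par u \in ancT v0.
  by apply: (anc_trans Hp Hd v0CT ua); have := par_anc Hp Hd uC.
have uX : inl u \in CX' by rewrite CX'_inl ua ua'.
have uaX : inl u \in ancX (inl v0) by rewrite memAncX.
rewrite (Dd_spine Hp Hd v0C' uC ua) (Dd_spine HpX HdX Hv0X uX uaX) /=.
by rewrite bbX_eq // IH.
Qed.

Lemma EeX_eq w : w \in ancT v0 -> w != v0 -> EeX (inl w) = Ee t a par w.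
Proof.
move=> wa wv.
have [s sa /andP [sC /eqP ps]] := child_exists Hp Hd v0CT wa wv.
rewrite (Ee_spine' aC Hp Hd v0C' H1T wa sa sC ps).
have waX : inl w \in ancX (inl v0) by rewrite memAncX.
have saX : inl s \in ancX (inl v0) by rewrite memAncX.
have sX : inl s \in CX'.
  by rewrite CX'_inl sa; move: sC; rewrite in_setD1 => /andP [].
have psX : parX (inl s) = inl w by rewrite /= ps.
rewrite (Ee_spine' HrX HpX HdX Hv0X H1X waX saX sX psX).
by rewrite gpX_inl bbX_eq.
Qed.

Lemma sum_DE_eq :
  (\sum_(w in CX' | (w \in ancX (inl v0)) && (w != inl v0)) DdX w * EeX w =
   \sum_(w in C' | (w \in ancT v0) && (w != v0)) Dd t a par dep w * Ee t a par w)%R.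
Proof.
pose S2 := [set w in C' | (w \in ancT v0) && (w != v0)].
rewrite (eq_bigl (fun x => x \in [set inl w | w in S2])); last first.
  case=> [u|v].
    rewrite CX'_inl memAncX (inj_eq inl_inj) (mem_imset _ _ inl_inj) inE.
    case ua: (u \in ancT v0); rewrite ?andbF //= in_setD1 (anc_memC aC Hp Hd v0CT ua).
    by rewrite andbT.
  by rewrite memAncX /= andbF inr_notin_inl.
rewrite big_imset /=; last by move=> x y _ _ [].
rewrite [RHS](eq_bigl (fun w => w \in S2)); last by move=> w; rewrite /S2 [in RHS]in_set.
apply: eq_bigr => w /setIdP [wC /andP [wa wv]].
by rewrite (DdX_eq _ wa) ?EeX_eq //; move: wC; rewrite in_setD1 => /andP [].
Qed.

Hypothesis hf : forall b, b \in dA t :\: A0 t -> df t b = 1.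

Lemma MX_eq : M X = (- \sum_(w in CX') xgX w * ((#|chX w|)%:R - 1))%R.
Proof.
have dfa : df t a = 1 := hf haA.
have hA : dA X :\: A0 X = [set inl a].
  apply/setP; case=> [u|v]; rewrite in_setD /A0 in_set in_set1.
    rewrite (inj_eq inl_inj) /= !in_setU inl_notin_inr (mem_imset _ _ inl_inj) in_set1 orbF.
    by case: (u =P a) => [->|] //=; rewrite dfa.
  by rewrite /= !in_setU inr_notin_inl /= andbT andNb.
have hV : dV X :|: A0 X = CX'.
  apply/setP; case=> [u|v]; rewrite in_setU /A0 in_set.
    rewrite CX'_inl /= (mem_imset _ _ inl_inj) TXV_mem !in_setU inl_notin_inr.
    rewrite (mem_imset _ _ inl_inj) in_set1 orbF.
    by case: (u =P a) => [->|]; rewrite ?andbF ?dfa //= orbF.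
  by rewrite CX'_inr /= inr_notin_inl !in_setU inr_notin_inl (mem_imset _ _ inr_inj) andbT.
rewrite /M hV; congr (- _)%R; apply: eq_bigr => v vX.
have vC : v \in CX by move: vX; rewrite in_setD1 => /andP [].
rewrite /Nv hA big_set1 /xva /= dfa GRing.mul1r (prod_incident HrX HpX HdX HEX vC).
rewrite (valencyE HdX HEX) vX.
by rewrite -natz natrD; congr (_ * _)%R; rewrite -[(1%:R : int)]/(1%R); ring.
Qed.

Local Notation B := ((dA t :\: A0 t) :\ a).

Lemma Malpha_eq : Malpha t a =
  (- (\sum_(w in C') xg t a par dep w * ((#|ch t a par w|)%:R - 1) +
      \sum_(b in B) xg t a par dep b))%R.
Proof.
have dfa : df t a = 1 := hf haA.
have hF : forall v, v \in C' -> (xva t v a * ((valency t v)%:Z - 2) =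
     xg t a par dep v * ((#|ch t a par v|)%:R - 1))%R.
  move=> v vC; have vC0 : v \in C by move: vC; rewrite in_setD1 => /andP [].
  rewrite /xva dfa GRing.mul1r (prod_incident aC Hp Hd HE vC0) valT vC.
  by rewrite -natz natrD; congr (_ * _)%R; rewrite -[(1%:R : int)]/(1%R); ring.
have aA0 : a \notin A0 t by move: haA; rewrite in_setD => /andP [].
have hA0 : forall v, (v \in A0 t) = (v \in dA t) && (df t v == 0).
  by move=> v; rewrite /A0 in_set.
have split : forall v, (v \in C') && (v \notin B) = (v \in dV t :|: A0 t).
  move=> v; rewrite !in_setD1 in_setD in_setU /cells in_setU hA0.
  case: (v =P a) => [->|_] /=.
    rewrite dfa andbF orbF; apply/esym/negbTE/negP => aV.
    exact: (notVA aV aA).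
  case vV: (v \in dV t) => /=.
    by case vA: (v \in dA t) => //; case: (notVA vV vA).
  by case: (v \in dA t); case: (df t v == 0).
have hB : forall v, (v \in C') && (v \in B) = (v \in B).
  move=> v; case vB: (v \in B); rewrite ?andbF ?andbT //.
  move: vB; rewrite !in_setD1 in_setD => /and3P [va _ vA].
  by rewrite va /cells in_setU vA orbT.
pose F v := (xg t a par dep v * ((#|ch t a par v|)%:R - 1))%R.
have e1 : (\sum_(v in C') F v = \sum_(v in dV t :|: A0 t) F v + \sum_(v in B) F v)%R.
  rewrite (bigID (fun v => v \in B)) /= GRing.addrC.
  by congr (_ + _)%R; apply: eq_bigl => v; [exact: split | exact: hB].
have e2 : (\sum_(v in dV t :|: A0 t) xva t v a * ((valency t v)%:Z - 2) =
           \sum_(v in dV t :|: A0 t) F v)%R.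
  apply: eq_bigr => v vV; apply: hF.
  by move: vV; rewrite -split => /andP [].
have e3 : (\sum_(v in B) F v = - \sum_(b in B) xg t a par dep b)%R.
  rewrite -GRing.sumrN; apply: eq_bigr => b; rewrite in_setD1 in_setD => /and3P [ba _ bA].
  by rewrite /F (ch_arrow0 bA ba) GRing.sub0r GRing.mulrN1.
rewrite /Malpha e2.
have -> : (\sum_(v in dV t :|: A0 t) F v = \sum_(v in C') F v - \sum_(v in B) F v)%R.
  by rewrite e1 GRing.addrK.
by rewrite e3 /F; ring.
Qed.

Lemma Ialpha_eq : Ialpha t a = (\sum_(b in B) xg t a par dep b)%R.
Proof.
rewrite /Ialpha; apply: eq_bigr => b bB.
have bA0 : b \in dA t :\: A0 t by move: bB; rewrite in_setD1 => /andP [].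
have ba : b != a by move: bB; rewrite in_setD1 => /andP [].
have bA : b \in dA t by move: bA0; rewrite in_setD => /andP [].
by rewrite (hf haA) (hf bA0) !GRing.mulr1 Qstar_xg.
Qed.

Lemma main_eq : (M X - Malpha t a = Ialpha t a)%R.
Proof.
rewrite MX_eq Malpha_eq Ialpha_eq.
rewrite (S_formula HpX HdX Hv0X H1X H2X) (S_formula Hp Hd v0C' H1T H2T) sum_DE_eq.
ring.
Qed.

End Main.

Local Open Scope ring_scope.

Theorem lemma4p11 (T : finType) (t : dtree T) (v0 : T) :
  decorated t -> pseudo_root t v0 ->
  (forall a, a \in dA t :\: A0 t -> df t a = 1) ->
  forall a, a \in dA t :\: A0 t ->
    M (TX t v0 [set a]) - Malpha t a = Ialpha t a.
Proof.
move=> dec pr hf a ha.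
exact: (main_eq dec pr ha hf).
Qed.
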